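(* For $k\geq 3$ and $r\geq 2$, $$M(k;r)\leq \sum_{i=0}^{k-3}(i+1)\,M(k-i;r-1)-\frac{k^2}{2}+\frac{3k}{2}+(k-1)r.$$
   Context: A sequence of positive integers $w_1<\dots<w_n$ is an ascending wave if $w_{i+1}-w_i \geq w_i-w_{i-1}$ for $2\le i\le n-1$. $AW(k;r)$ is the least $N$ such that every $r$-coloring of $\{1,\dots,N\}$ contains a $k$-term monochromatic ascending wave. For $k\ge 2$ and $M\ge AW(k;r)$: for an $r$-coloring $\psi$ of $\{1,\dots,M\}$, $\delta_k(\psi)$ is the minimum of $w_k-w_{k-1}$ over all monochromatic $k$-term ascending waves $(w_1,\dots,w_k)$ under $\psi$, and $\Delta^M(k;r)$ is the maximum of $\delta_k(\psi)$ over all $r$-colorings $\psi$ of $\{1,\dots,M\}$. The integers $M(k;r)$ are defined by $M(k;1)=k$, $M(1;r)=1$, $M(2;r)=r+1$, and for $k\ge3$, $r\ge2$, $M(k;r)=M(k-1;r)+\Delta^{M(k-1;r)}(k-1;r)+M(k;r-1)-1$; one has $M(k;r)\ge AW(k;r)$ so these quantities are defined. *)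

(* Defs.v *)
From mathcomp Require Import all_boot all_order all_algebra.
Set Implicit Arguments. Unset Strict Implicit. Unset Printing Implicit Defensive.

(* Colorings of {1,...,N} with r colors: c : {ffun 'I_N -> 'I_r}, where
   the ordinal i : 'I_N stands for the integer i+1.
   A k-term sequence of elements of {1,...,N}: w : {ffun 'I_k -> 'I_N}
   (the term w_{i+1} is the integer (w i)+1). *)

(* n-th term (0-indexed) of w as a natural number (shifted by -1). *)
Definition wv (k N : nat) (w : {ffun 'I_k -> 'I_N}) (n : nat) : nat :=
  if insub n is Some i then nat_of_ord (w i) else 0.

Definition asc_wave (k N : nat) (w : {ffun 'I_k -> 'I_N}) : bool :=
  [forall i : 'I_k, (i.+1 < k) ==> (wv w i < wv w i.+1)] &&
  [forall i : 'I_k, (i.+2 < k) ==>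
      (wv w i.+1 - wv w i <= wv w i.+2 - wv w i.+1)].

Definition monochromatic (k N r : nat) (c : {ffun 'I_N -> 'I_r})
  (w : {ffun 'I_k -> 'I_N}) : bool :=
  [forall i : 'I_k, forall j : 'I_k, c (w i) == c (w j)].

(* delta_k(c) : minimum of w_k - w_{k-1} over monochromatic k-term ascending
   waves.  The default value N of the min is never reached when such a wave
   exists (all these differences are < N). *)
Definition delta (k N r : nat) (c : {ffun 'I_N -> 'I_r}) : nat :=
  \big[minn/N]_(w : {ffun 'I_k -> 'I_N} | asc_wave w && monochromatic c w)
     (wv w k.-1 - wv w k.-2).

Definition Delta (N k r : nat) : nat :=
  \max_(c : {ffun 'I_N -> 'I_r}) delta k c.

(* M(k;r) as a function Mfun r k. M(k;1)=k, M(1;r)=1, M(2;r)=r+1,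
   M(k;r) = M(k-1;r) + Delta^{M(k-1;r)}(k-1;r) + M(k;r-1) - 1 for k>=3, r>=2.
   Values at k = 0 or r = 0 are unused junk (0). *)
Fixpoint Mfun (r : nat) : nat -> nat :=
  match r with
  | 0 => fun _ => 0
  | 1 => fun k => k
  | r'.+1 => fix g (k : nat) : nat :=
      match k with
      | 0 => 0
      | 1 => 1
      | 2 => r'.+2
      | k'.+1 => g k' + Delta (g k') k' r'.+1 + Mfun r' k'.+1 - 1
      end
  end.

Definition M (k r : nat) : nat := Mfun r k.

(* Main.v *)
Require Import Defs.
From mathcomp Require Import all_boot all_order all_algebra zify.
Set Implicit Arguments. Unset Strict Implicit. Unset Printing Implicit Defensive.
Lemma M_rec r m : (2 <= r)%N -> (3 <= m)%N ->
  M m r = M m.-1 r + Delta (M m.-1 r) m.-1 r + M m r.-1 - 1.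
Proof. case: r => [|[|r]] //; case: m => [|[|[|m]]] //. Qed.
Lemma M2 r : (1 <= r)%N -> M 2 r = r.+1.
Proof. by case: r => [|[|r]]. Qed.
Lemma M1 m : M m 1 = m. Proof. by []. Qed.

Definition wavef (k : nat) (f : nat -> nat) : Prop :=
  (forall i, i.+1 < k -> f i < f i.+1) /\
  (forall i, i.+2 < k -> f i.+1 - f i <= f i.+2 - f i.+1).

Definition GoodB (N k r B : nat) : Prop :=
  forall col : nat -> nat, (forall x, x < N -> col x < r) ->
  exists f, [/\ wavef k f, (forall i, i < k -> f i < N),
     (forall i, i < k -> col (f i) = col (f 0)) & f k.-1 - f k.-2 <= B].

Definition Good N k r := GoodB N k r N.

Definition colof N r (c : {ffun 'I_N -> 'I_r}) (x : nat) : nat :=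
  match insub x with Some i => nat_of_ord (c i) | None => 0 end.

Lemma colofE N r (c : {ffun 'I_N -> 'I_r}) (i : 'I_N) : colof c i = c i.
Proof. by rewrite /colof valK. Qed.

Lemma colof_lt N r (c : {ffun 'I_N -> 'I_r}) x : x < N -> colof c x < r.
Proof. move=> h. by rewrite (_ : x = Ordinal h) // colofE. Qed.

Lemma wvE k N (w : {ffun 'I_k -> 'I_N}) n (h : n < k) : wv w n = w (Ordinal h).
Proof. by rewrite /wv insubT. Qed.

Lemma wv_le k N (w : {ffun 'I_k -> 'I_N}) n : wv w n <= N.
Proof. rewrite /wv; case: insub => [i|] //; exact: ltnW. Qed.

Lemma mk_wave k N r (c : {ffun 'I_N -> 'I_r}) f :
  wavef k f -> (forall i, i < k -> f i < N) ->
  (forall i, i < k -> colof c (f i) = colof c (f 0)) ->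
  exists w : {ffun 'I_k -> 'I_N}, (asc_wave w && monochromatic c w) /\
    (forall n, n < k -> wv w n = f n).
Proof.
move=> [finc fconv] frange fmono.
pose w := [ffun i : 'I_k => Ordinal (frange i (ltn_ord i))].
have hw : forall n, n < k -> wv w n = f n.
  by move=> n hn; rewrite (wvE w hn) ffunE.
exists w; split => //; apply/andP; split.
- apply/andP; split; apply/forallP => i; apply/implyP => hi.
  + by rewrite !hw ?(ltnW hi) //; apply: finc.
  + by rewrite !hw ?(ltnW hi) ?(ltnW (ltnW hi)) //; apply: fconv.
- apply/forallP => i; apply/forallP => j; apply/eqP/val_inj => /=.
  rewrite !ffunE -!colofE /=.
  have k0 : 0 < k by case: (k) i => // [[]].
  by rewrite !fmono.
Qed.

Lemma of_wave k N r (c : {ffun 'I_N -> 'I_r}) (w : {ffun 'I_k -> 'I_N}) :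
  0 < k -> asc_wave w && monochromatic c w ->
  [/\ wavef k (wv w), (forall i, i < k -> wv w i < N) &
      (forall i, i < k -> colof c (wv w i) = colof c (wv w 0))].
Proof.
move=> k0 /andP [/andP [/forallP hinc /forallP hconv] /forallP hmono].
split.
- split => i hi.
  + exact: (implyP (hinc (Ordinal (ltnW hi))) hi).
  + exact: (implyP (hconv (Ordinal (ltnW (ltnW hi)))) hi).
- by move=> i hi; rewrite (wvE w hi).
- move=> i hi; rewrite (wvE w hi) (wvE w k0) !colofE.
  by move: (forallP (hmono (Ordinal hi)) (Ordinal k0)) => /eqP ->.
Qed.

Lemma bigmin_le_seq (I : eqType) (s : seq I) (P : pred I) (F : I -> nat) N w :
  w \in s -> P w -> \big[minn/N]_(i <- s | P i) F i <= F w.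
Proof.
elim: s => // x s IH; rewrite inE big_cons => /orP [/eqP -> Pw|hs Pw].
  by rewrite Pw geq_minl.
case: (P x); last exact: IH.
by rewrite (leq_trans (geq_minr _ _)) // IH.
Qed.

Lemma Delta_le N k r B : 2 <= k ->
  (forall col : nat -> nat, (forall x, x < N -> col x < r) ->
  exists f, [/\ wavef k f, (forall i, i < k -> f i < N),
     (forall i, i < k -> col (f i) = col (f 0)) & f k.-1 - f k.-2 <= B]) ->
  Delta N k r <= B.
Proof.
move=> hk H; apply/bigmax_leqP => c _.
have [f [fw fr fm fg]] := H (colof c) (fun x => @colof_lt N r c x).
have [w [Pw hw]] := mk_wave fw fr fm.
rewrite /delta (leq_trans (@bigmin_le_seq _ _ _ _ _ w (mem_index_enum w) Pw)) //.
rewrite !hw //; [lia | lia].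
Qed.

Lemma delta_le_Delta N k r (c : {ffun 'I_N -> 'I_r}) : delta k c <= Delta N k r.
Proof. rewrite /Delta; exact: leq_bigmax. Qed.

Lemma le_delta k N r (c : {ffun 'I_N -> 'I_r}) m : m <= N ->
  (forall w : {ffun 'I_k -> 'I_N}, asc_wave w && monochromatic c w ->
     m <= wv w k.-1 - wv w k.-2) -> m <= delta k c.
Proof.
move=> hN H; rewrite /delta; elim/big_ind: _ => //.
by move=> x y hx hy; rewrite leq_min hx hy.
Qed.

Lemma DeltaWit N k r : 2 <= k -> Good N k r ->
  forall col : nat -> nat, (forall x, x < N -> col x < r) ->
  exists f, [/\ wavef k f, (forall i, i < k -> f i < N),
     (forall i, i < k -> col (f i) = col (f 0)) & f k.-1 - f k.-2 <= Delta N k r].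
Proof.
move=> hk G col hcol.
pose c := [ffun i : 'I_N => Ordinal (hcol i (ltn_ord i))].
have hc : forall x, x < N -> colof c x = col x.
  by move=> x hx; rewrite (_ : x = Ordinal hx) // colofE ffunE.
have [f0 [fw fr fm _]] := G col hcol.
have [w0 [Pw0 _]] := @mk_wave k N r c f0 fw fr
   (fun i hi => etrans (hc _ (fr i hi)) (etrans (fm i hi) (esym (hc _ (fr 0 (ltnW hk)))))).
pose F := fun w : {ffun 'I_k -> 'I_N} => wv w k.-1 - wv w k.-2.
case: (@arg_minnP _ w0 (fun w => asc_wave w && monochromatic c w) F Pw0) => wm Pwm hmin.
have [ww wr wm'] := of_wave (ltnW hk) Pwm.
exists (wv wm); split => //.
  move=> i hi; exact: (etrans (esym (hc _ (wr i hi))) (etrans (wm' i hi) (hc _ (wr 0 (ltnW hk))))).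
apply: (@leq_trans (delta k c)); last exact: delta_le_Delta.
apply: le_delta; last exact: hmin.
by rewrite (leq_trans (leq_subr _ _)) // wv_le.
Qed.

Local Arguments M : simpl never.
Local Arguments Delta : simpl never.

Lemma Good_pos N k r : Good N k r -> 0 < r -> 0 < k -> 0 < N.
Proof.
move=> G hr hk; have [f [_ fr _ _]] := G (fun _ => 0) (fun _ _ => hr).
exact: (leq_ltn_trans (leq0n (f 0)) (fr 0 hk)).
Qed.

Lemma GoodB_weak N k r B : GoodB N k r B -> B <= N -> Good N k r.
Proof.
move=> G hB col hcol; have [f [h1 h2 h3 h4]] := G col hcol.
by exists f; split => //; apply: leq_trans hB.
Qed.

Lemma good_r1 m : 0 < m -> Good m m 1.
Proof.
move=> hm col hcol; exists (fun i => i); split.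
- by split => i hi; lia.
- by [].
- move=> i hi; have := hcol i hi; have := hcol 0 hm; lia.
- lia.
Qed.

Lemma pair_good (col : nat -> nat) r x y : x < y -> y < r.+1 -> col x = col y ->
  exists f, [/\ wavef 2 f, (forall i, i < 2 -> f i < r.+1),
     (forall i, i < 2 -> col (f i) = col (f 0)) & f 2.-1 - f 2.-2 <= r.+1].
Proof.
move=> lt hy hc.
exists (fun i => if i is 0 then x else y); split.
- by split => [[|i] hi|i hi] //=.
- by move=> [|[|i]] hi //=; apply: ltn_trans hy.
- by move=> [|[|i]] hi //=.
- by rewrite /= (leq_trans (leq_subr _ _)) // ltnW.
Qed.

Lemma good_m2 r : 0 < r -> Good (M 2 r) 2 r.
Proof.
move=> hr; rewrite M2 // => col hcol.
pose h := fun i : 'I_r.+1 => (Ordinal (hcol i (ltn_ord i)) : 'I_r).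
have : ~~ injectiveb h.
  apply/negP => /injectiveP hi; move: (@leq_card _ _ h hi); by rewrite !card_ord ltnn.
case/injectivePn => x [y hxy hh].
have hc : col x = col y by move: (congr1 val hh).
case: (ltngtP x y) => h'.
- exact: pair_good h' (ltn_ord y) hc.
- exact: pair_good h' (ltn_ord x) (esym hc).
- by move: hxy; rewrite (val_inj h') eqxx.
Qed.

Definition rc (c0 v : nat) := if v < c0 then v else v.-1.

Lemma rc_inj c0 u v : u != c0 -> v != c0 -> rc c0 u = rc c0 v -> u = v.
Proof. rewrite /rc => hu hv; case: (ltnP u c0) => ?; case: (ltnP v c0) => ?; lia. Qed.

Lemma rc_lt c0 r v : v != c0 -> v < r -> c0 < r -> rc c0 v < r.-1.
Proof. rewrite /rc => hv h1 h2; case: (ltnP v c0) => ?; lia. Qed.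

Lemma step r n : 2 <= r ->
  Good (M n.+2 r) n.+2 r -> Good (M n.+3 r.-1) n.+3 r.-1 ->
  GoodB (M n.+3 r) n.+3 r (M n.+3 r - M n.+2 r).
Proof.
move=> hr G1 G2.
have ha := @M_rec r n.+3 hr isT; rewrite /= in ha.
set a' := M n.+2 r in G1 ha *. set D := Delta a' n.+2 r in ha *.
set b := M n.+3 r.-1 in G2 ha *. set a := M n.+3 r in ha *.
have hb : 0 < b by apply: (Good_pos G2) => //; lia.
move=> col hcol.
have hcol' : forall x, x < a' -> col x < r by move=> x hx; apply: hcol; lia.
have [f [[finc fconv] fr fm fg]] := DeltaWit (isT : 2 <= n.+2) G1 hcol'.
have fg' : f n.+1 - f n <= D := fg.
have hx : f n.+1 < a' := fr _ (ltnSn _).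
have hd : f n < f n.+1 := finc n (ltnSn _).
have c0r : col (f 0) < r := hcol' _ (fr 0 isT).
case: (boolP [exists y : 'I_b, col (f n.+1 + (f n.+1 - f n) + y) == col (f 0)]).
- case/existsP => y /eqP hy.
  have yb := ltn_ord y.
  exists (fun i => if i < n.+2 then f i else f n.+1 + (f n.+1 - f n) + y); split.
  + split=> i hi; cbv beta.
    * case: (ltnP i.+1 n.+2) => h1.
        by rewrite (ltnW h1); apply: finc.
      have ei : i = n.+1 by lia.
      by subst i; rewrite ltnSn; lia.
    * case: (ltnP i.+2 n.+2) => h1.
        by rewrite (ltnW h1) (ltnW (ltnW h1)); apply: fconv.
      have ei : i = n by lia.
      by subst i; rewrite ltnSn (ltnW (ltnSn n.+1)); lia.
  + move=> i hi; cbv beta; case: ifPn => h; last by lia.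
    by have := fr i h; lia.
  + move=> i hi; cbv beta; rewrite (_ : 0 < n.+2) //; case: ifPn => h; [exact: fm | exact: hy].
  + by rewrite /= ltnn ltnSn; lia.
- rewrite negb_exists => /forallP hno.
  have hne : forall y, y < b -> col (f n.+1 + (f n.+1 - f n) + y) != col (f 0).
    by move=> y hy; exact: (hno (Ordinal hy)).
  pose col' := fun y => rc (col (f 0)) (col (f n.+1 + (f n.+1 - f n) + y)).
  have hcb : forall y, y < b -> col' y < r.-1.
    move=> y hy; apply: rc_lt => //; first exact: hne.
    by apply: hcol; lia.
  have [g [[ginc gconv] gr gm gg]] := G2 col' hcb.
  exists (fun i => f n.+1 + (f n.+1 - f n) + g i); split.
  + split=> i hi; first by rewrite ltn_add2l; apply: ginc.
    by rewrite !subnDl; apply: gconv.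
  + by move=> i hi; have := gr i hi; lia.
  + move=> i hi.
    exact: (rc_inj (hne _ (gr i hi)) (hne _ (gr 0 isT)) (gm i hi)).
  + by rewrite /= subnDl; have := gr n.+2 (ltnSn _); lia.
Qed.

Lemma Good_all r : 0 < r -> forall m, 1 < m -> Good (M m r) m r.
Proof.
elim: r => // r IHr _.
case: (eqVneq r 0) => [-> | r0].
  by move=> m hm; rewrite M1; apply: good_r1; lia.
elim => // m IHm.
case: m IHm => [|[|n]] IHm hm //.
  by apply: good_m2.
apply: GoodB_weak (leq_subr _ _).
apply: step => //; first lia.
  exact: IHm.
by apply: IHr => //; lia.
Qed.

Lemma Delta_step r n : 2 <= r -> Delta (M n.+3 r) n.+3 r <= M n.+3 r - M n.+2 r.
Proof.
move=> hr; apply: Delta_le => //.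
apply: step => //; apply: Good_all => //; lia.
Qed.

Lemma Delta_2 r : 1 <= r -> Delta (M 2 r) 2 r <= r.
Proof.
move=> hr; apply: Delta_le => // col hcol.
have [f [fw fr fm _]] := Good_all hr (isT : 1 < 2) hcol.
exists f; split => //=; have := fr 1 isT; rewrite M2 //; lia.
Qed.

From mathcomp Require Import ring lra.
Import Order.TTheory GRing.Theory Num.Theory.
Local Open Scope ring_scope.

Definition SS r n : rat := \sum_(0 <= i < n) (i.+1)%:R * (M (n.+2 - i) r.-1)%:R.
Definition BB r n : rat := \sum_(0 <= i < n) (M (n.+2 - i) r.-1)%:R.

Lemma BBs r n : BB r n.+1 = BB r n + (M n.+3 r.-1)%:R.
Proof.
by rewrite /BB big_nat_recl // subn0 addrC.
Qed.

Lemma SSs r n : SS r n.+1 = SS r n + BB r n.+1.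
Proof.
have E : \sum_(0 <= i < n) (i.+2)%:R * (M (n.+3 - i.+1) r.-1)%:R = SS r n + BB r n.
  rewrite /SS /BB -big_split; apply: eq_bigr => i _.
  by rewrite subSS mulrS mulrDl mul1r addrC.
rewrite {1}/SS big_nat_recl // subn0 mulr1n mul1r E BBs; lra.
Qed.

Lemma BB0 r : BB r 0 = 0.
Proof. by rewrite /BB big_geq. Qed.
Lemma SS0 r : SS r 0 = 0.
Proof. by rewrite /SS big_geq. Qed.

Lemma Mb_pos r n : (2 <= r)%N -> (0 < M n.+3 r.-1)%N.
Proof.
move=> hr; have h1 : (0 < r.-1)%N by lia.
exact: (Good_pos (Good_all h1 (isT : (1 < n.+3)%N)) h1 (isT : (0 < n.+3)%N)).
Qed.

Lemma F2 r n : (2 <= r)%N -> (M n.+3 r)%:R = (M n.+2 r)%:R +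
  (Delta (M n.+2 r) n.+2 r)%:R + (M n.+3 r.-1)%:R - 1 :> rat.
Proof.
move=> hr; have hb := Mb_pos n hr.
rewrite (M_rec hr (isT : (3 <= n.+3)%N)) /=.
rewrite natrB ?natrD ?mulr1n //; lia.
Qed.

Lemma F4 r n : (2 <= r)%N ->
  (Delta (M n.+3 r) n.+3 r)%:R <= (M n.+3 r)%:R - (M n.+2 r)%:R :> rat.
Proof.
move=> hr; have h := Delta_step n hr; have hb := Mb_pos n hr.
have hle : (M n.+2 r <= M n.+3 r)%N.
  rewrite (M_rec hr (isT : (3 <= n.+3)%N)) /=; lia.
by rewrite -natrB // ler_nat.
Qed.

Lemma F3 r : (1 <= r)%N -> (Delta (M 2 r) 2 r)%:R <= r%:R :> rat.
Proof. by move=> hr; rewrite ler_nat; apply: Delta_2. Qed.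

Lemma natS (n : nat) : (n.+1)%:R = n%:R + 1 :> rat.
Proof. by rewrite mulrS addrC. Qed.

Lemma J r n : (2 <= r)%N ->
  (Delta (M n.+2 r) n.+2 r)%:R <= BB r n - n%:R + r%:R :> rat.
Proof.
move=> hr; elim: n => [|n IH].
  by rewrite BB0 mulr0n; have := F3 (ltnW hr); lra.
have := F4 n hr; have := F2 n hr; rewrite BBs natS; lra.
Qed.

Lemma Q r n : (2 <= r)%N ->
  (M n.+3 r)%:R <= SS r n.+1 - (n%:R + 3) ^+ 2 / 2 + 3 * (n%:R + 3) / 2
                   + (n%:R + 2) * r%:R :> rat.
Proof.
move=> hr; elim: n => [|n IH].
  have := F2 0 hr; have := F3 (ltnW hr).
  rewrite SSs SS0 BBs BB0 M2 ?(ltnW hr) // natS mulr0n; lra.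
have := F2 n.+1 hr; have := J n.+1 hr.
rewrite SSs !BBs natS.
have e1 : (n%:R + 1 + 3) ^+ 2 = (n%:R + 3) ^+ 2 + 2 * n%:R + 7 :> rat by ring.
have e2 : (n%:R + 1 + 2) * r%:R = (n%:R + 2) * r%:R + r%:R :> rat by ring.
have e3 : 3 * (n%:R + 1 + 3) = 3 * (n%:R + 3) + 3 :> rat by ring.
rewrite e1 e2 e3; lra.
Qed.

Theorem lemma1p3 (k r : nat) : (3 <= k)%N -> (2 <= r)%N ->
  (M k r)%:R <= (\sum_(0 <= i < k - 2) (i.+1)%:R * (M (k - i) r.-1)%:R
                   - (k ^ 2)%:R / 2 + (3 * k)%:R / 2 + ((k - 1) * r)%:R : rat).
Proof.
move=> hk hr; case: k hk => [|[|[|n]]] // _.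
have HQ := Q n hr.
rewrite (_ : (n.+3 - 2)%N = n.+1) // -/(SS r n.+1).
rewrite (_ : (n.+3 - 1)%N = n.+2) // natrX !natrM.
have e3 : (n.+3)%:R = n%:R + 3 :> rat by rewrite -addn3 natrD.
have e2 : (n.+2)%:R = n%:R + 2 :> rat by rewrite -addn2 natrD.
rewrite e3 e2; lra.
Qed.
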